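(* Let $G$ be a complete split graph with partition $(K,S)$, $K\neq\emptyset$, whose vertices are each colored $A$, $B$ or $C$. If every vertex of $K$ has color $A$ (resp. $B$), then the Normal Partizan Domination game on $G$ has the same value as the game on the star whose leaves are the vertices of $S$ (with their colors) and whose center has color $A$ (resp. $B$). Otherwise, the game on $G$ has the same value as the game on that star with center colored $C$.
   Context: A complete split graph is a graph $G$ whose vertex set has a partition $(K,S)$ such that $K$ induces a clique, $S$ is an independent set, and every vertex of $K$ is adjacent to every vertex of $S$. Normal Partizan Domination game: a finite graph has each vertex colored $A$, $B$ or $C$. Alice and Bob alternately select a vertex; Alice may only select vertices colored $A$ or $C$, Bob only vertices colored $B$ or $C$. A vertex $u$ dominates $v$ if $u=v$ or $uv$ is an edge. A vertex may be selected only if it is playable, i.e. it dominates at least one vertex not dominated by the previously selected vertices; the game ends when the selected vertices form a dominating set. Under normal play the player unable to move loses. The game is regarded as a partizan combinatorial game with Alice as Left and Bob as Right, and its value is its value in Conway's combinatorial game theory ($G=H$ iff $G+(-H)$ is a second-player win). *)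

(* Defs.v *)
From mathcomp Require Import all_boot.
Set Implicit Arguments. Unset Strict Implicit. Unset Printing Implicit Defensive.

Record Game := MkGame {
  gpos : Type;
  gstart : gpos;
  lmove : gpos -> gpos -> Prop;
  rmove : gpos -> gpos -> Prop
}.

(* Outcomes under normal play (the player unable to move loses).
   LWin p  : Left, moving first from p, has a winning strategy.
   RLose p : Right, moving first from p, loses (Left wins as second player). *)
Inductive LWin (G : Game) : gpos G -> Prop :=
  | LWin_intro p p' : lmove p p' -> RLose p' -> LWin p
with RLose (G : Game) : gpos G -> Prop :=
  | RLose_intro p : (forall p', rmove p p' -> LWin p') -> RLose p.

Inductive RWin (G : Game) : gpos G -> Prop :=
  | RWin_intro p p' : rmove p p' -> LLose p' -> RWin p
with LLose (G : Game) : gpos G -> Prop :=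
  | LLose_intro p : (forall p', lmove p p' -> RWin p') -> LLose p.

Definition second_player_win (G : Game) : Prop :=
  LLose (gstart G) /\ RLose (gstart G).

Definition game_sum (G H : Game) : Game :=
  {| gpos := (gpos G * gpos H)%type;
     gstart := (gstart G, gstart H);
     lmove := fun p q => (lmove p.1 q.1 /\ q.2 = p.2) \/ (q.1 = p.1 /\ lmove p.2 q.2);
     rmove := fun p q => (rmove p.1 q.1 /\ q.2 = p.2) \/ (q.1 = p.1 /\ rmove p.2 q.2) |}.

Definition game_neg (G : Game) : Game :=
  {| gpos := gpos G; gstart := gstart G; lmove := @rmove G; rmove := @lmove G |}.

Definition game_eq (G H : Game) : Prop := second_player_win (game_sum G (game_neg H)).

Inductive color := cA | cB | cC.

Definition alice_can (c : color) : bool := match c with cA | cC => true | cB => false end.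
Definition bob_can (c : color) : bool := match c with cB | cC => true | cA => false end.

Section Domination.
Variables (T : finType) (e : rel T).

Definition dominates (u v : T) : bool := (u == v) || e u v.

Definition playable (S : {set T}) (v : T) : bool :=
  [exists w, dominates v w && ~~ [exists u in S, dominates u w]].
End Domination.

Definition dom_game (T : finType) (e : rel T) (col : T -> color) : Game :=
  {| gpos := {set T};
     gstart := set0;
     lmove := fun S S' => exists v, [/\ alice_can (col v), playable e S v & S' = v |: S];
     rmove := fun S S' => exists v, [/\ bob_can (col v), playable e S v & S' = v |: S] |}.

Definition complete_split (T : finType) (e : rel T) (K : {set T}) : Prop :=
  forall x y, e x y = (x != y) && ((x \in K) || (y \in K)).

(* vertices of the star: None is the center, Some s is the leaf s in S = ~: K *)
Definition star_vertex (T : finType) (K : {set T}) : finType :=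
  option {x : T | x \notin K}.

Definition star_edge (T : finType) (K : {set T}) : rel (star_vertex K) :=
  fun x y => match x, y with
             | None, Some _ | Some _, None => true
             | _, _ => false
             end.

Definition star_color (T : finType) (K : {set T}) (col : T -> color) (c : color)
  : star_vertex K -> color :=
  fun x => match x with None => c | Some s => col (val s) end.

Definition star_game (T : finType) (K : {set T}) (col : T -> color) (c : color) : Game :=
  dom_game (@star_edge T K) (star_color col c).

(* Main.v *)
Require Import Defs.
From mathcomp Require Import all_boot.
From mathcomp Require Import zify.
Set Implicit Arguments. Unset Strict Implicit. Unset Printing Implicit Defensive.

Lemma bisim (G H : Game) (m : gpos G -> nat) (R : gpos G -> gpos H -> Prop) :
 (forall p p', lmove p p' -> m p' < m p) ->
 (forall p p', rmove p p' -> m p' < m p) ->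
 (forall p q p', R p q -> lmove p p' -> exists2 q', lmove q q' & R p' q') ->
 (forall p q q', R p q -> lmove q q' -> exists2 p', lmove p p' & R p' q') ->
 (forall p q p', R p q -> rmove p p' -> exists2 q', rmove q q' & R p' q') ->
 (forall p q q', R p q -> rmove q q' -> exists2 p', rmove p p' & R p' q') ->
 R (gstart G) (gstart H) -> game_eq G H.
Proof.
move=> dl dr l1 l2 r1 r2 Rs.
suff: forall n p q, m p < n -> R p q ->
  @LLose (game_sum G (game_neg H)) (p, q) /\ @RLose (game_sum G (game_neg H)) (p, q).
  by move/(_ (m (gstart G)).+1 _ _ (ltnSn _) Rs).
set GS := game_sum G (game_neg H).
elim=> [//|n IH] p q mp Rpq; split.
- constructor => [[p' q']] /= [[Hl ->]|[-> Hr]].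
  + have [q'' Hq Rq] := l1 _ _ _ Rpq Hl.
    apply: (@RWin_intro GS (p', q) (p', q'')); first by right.
    apply: (proj1 (IH _ _ _ Rq)). have := dl _ _ Hl. lia.
  + have [p'' Hp Rp] := r2 _ _ _ Rpq Hr.
    apply: (@RWin_intro GS (p, q') (p'', q')); first by left.
    apply: (proj1 (IH _ _ _ Rp)). have := dr _ _ Hp. lia.
- constructor => [[p' q']] /= [[Hl ->]|[-> Hr]].
  + have [q'' Hq Rq] := r1 _ _ _ Rpq Hl.
    apply: (@LWin_intro GS (p', q) (p', q'')); first by right.
    apply: (proj2 (IH _ _ _ Rq)). have := dr _ _ Hl. lia.
  + have [p'' Hp Rp] := l2 _ _ _ Rpq Hr.
    apply: (@LWin_intro GS (p, q') (p'', q')); first by left.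
    apply: (proj2 (IH _ _ _ Rp)). have := dl _ _ Hp. lia.
Qed.

Lemma playable_notin (T : finType) (e : rel T) S v : playable e S v -> v \notin S.
Proof.
case/existsP=> w /andP[dw]; apply: contra => vS.
by apply/existsP; exists v; rewrite vS dw.
Qed.

Lemma move_dec (T : finType) (e : rel T) (p : {set T}) v :
  playable e p v -> #|T| - #|v |: p| < #|T| - #|p|.
Proof.
move/playable_notin => vp.
have h : #|v |: p| = (#|p|).+1 by rewrite cardsU1 vp.
have h2 : #|v |: p| <= #|T| by apply: max_card.
lia.
Qed.

Definition phi (T : finType) (K : {set T}) (x : T) : star_vertex K := insub x.

Lemma ex_imset (A B : finType) (f : A -> B) (p : {set A}) (P : pred B) :
  [exists u in f @: p, P u] = [exists u in p, P (f u)].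
Proof.
apply/existsP/existsP => [[u /andP[/imsetP[x Hx ->] Pu]]|[x /andP[Hx Px]]].
  by exists x; rewrite Hx Pu.
by exists (f x); rewrite imset_f.
Qed.

Section Main.
Variables (T : finType) (e : rel T) (K : {set T}) (col : T -> color) (c : color).
Hypothesis Hcs : complete_split e K.
Hypothesis HK : K != set0.

Lemma dom_eq u w : dominates e u w = dominates (@star_edge T K) (phi K u) (phi K w).
Proof.
rewrite /dominates Hcs /phi.
case: insubP => [a Ha Hau|Ha]; case: insubP => [b Hb Hbw|Hb] /=; try subst u; try subst w.
- rewrite (negbTE Ha) (negbTE Hb) /= andbF !orbF.
  by rewrite (inj_eq val_inj).
- move: Hb; rewrite negbK => ->; rewrite ?orbT ?andbT /=; by case: (_ == _).
- move: Ha; rewrite negbK => ->; rewrite ?orbT ?andbT /=; by case: (_ == _).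
- move: Ha; rewrite negbK => ->; rewrite ?orbT ?andbT /=; by case: (_ == _).
Qed.

Lemma phi_surj y : exists w, phi K w = y.
Proof.
case: y => [s|]; first by exists (val s); rewrite /phi valK.
case/set0Pn: HK => k kK; exists k; rewrite /phi insubF //; by rewrite kK.
Qed.

Lemma playable_eq (p : {set T}) v :
  playable (@star_edge T K) (phi K @: p) (phi K v) = playable e p v.
Proof.
have E : forall w, dominates e v w && ~~ [exists u in p, dominates e u w] =
  dominates (@star_edge T K) (phi K v) (phi K w) &&
  ~~ [exists u in p, dominates (@star_edge T K) (phi K u) (phi K w)].
  move=> w; rewrite dom_eq; congr (_ && ~~ _); apply: eq_existsb => u.
  by rewrite dom_eq.
rewrite /playable; apply/existsP/existsP => [[y]|[w]].
  have [w <-] := phi_surj y; rewrite ex_imset => Hw.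
  by exists w; rewrite E.
rewrite E => Hw; exists (phi K w); by rewrite ex_imset.
Qed.

Lemma col1 (can : color -> bool) : can c = [exists v in K, can (col v)] ->
  forall v, can (col v) -> can (star_color col c (phi K v)).
Proof.
move=> Hc v cv; rewrite /phi; case: insubP => [u Hu Huv|Hin] /=; first by rewrite Huv.
rewrite negbK in Hin; rewrite Hc; apply/existsP; exists v; by rewrite Hin cv.
Qed.

Lemma col2 (can : color -> bool) : can c = [exists v in K, can (col v)] ->
  forall y, can (star_color col c y) -> exists v, phi K v = y /\ can (col v).
Proof.
move=> Hc [s|] /= cs; first by exists (val s); rewrite /phi valK.
move: cs; rewrite Hc => /existsP[v /andP[vK cv]]; exists v; split=> //.
by rewrite /phi insubF // vK.
Qed.

Lemma main_eq : alice_can c = [exists v in K, alice_can (col v)] ->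
  bob_can c = [exists v in K, bob_can (col v)] ->
  game_eq (dom_game e col) (star_game K col c).
Proof.
move=> HA HB.
apply: (@bisim (dom_game e col) (star_game K col c) (fun p : {set T} => #|T| - #|p|)
          (fun (p : {set T}) (q : {set star_vertex K}) => q = phi K @: p)).
- by move=> p p0 [v [_ pl ->]]; exact: move_dec pl.
- by move=> p p0 [v [_ pl ->]]; exact: move_dec pl.
- move=> p q p' -> [v [cv pl ->]]; exists (phi K v |: phi K @: p).
    by exists (phi K v); rewrite playable_eq (col1 HA).
  by rewrite imsetU1.
- move=> p q q' -> [y [cy pl ->]]; have [v [Hv cv]] := col2 HA cy; subst y.
  exists (v |: p); last by rewrite imsetU1.
  by exists v; rewrite -playable_eq.
- move=> p q p' -> [v [cv pl ->]]; exists (phi K v |: phi K @: p).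
    by exists (phi K v); rewrite playable_eq (col1 HB).
  by rewrite imsetU1.
- move=> p q q' -> [y [cy pl ->]]; have [v [Hv cv]] := col2 HB cy; subst y.
  exists (v |: p); last by rewrite imsetU1.
  by exists v; rewrite -playable_eq.
- by rewrite /= imset0.
Qed.
End Main.

Theorem theorem10 (T : finType) (e : rel T) (K : {set T}) (col : T -> color) :
  complete_split e K -> K != set0 ->
  [/\ (forall v, v \in K -> col v = cA) -> game_eq (dom_game e col) (star_game K col cA),
      (forall v, v \in K -> col v = cB) -> game_eq (dom_game e col) (star_game K col cB)
    & ~ (forall v, v \in K -> col v = cA) -> ~ (forall v, v \in K -> col v = cB) ->
      game_eq (dom_game e col) (star_game K col cC)].
Proof.
move=> Hcs HK; have [k kK] := set0Pn _ HK.
split.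
- move=> H; apply: main_eq => //.
    by apply/esym/existsP; exists k; rewrite kK H.
  apply/esym/existsP => [[v /andP[vK]]]; by rewrite H.
- move=> H; apply: main_eq => //.
    apply/esym/existsP => [[v /andP[vK]]]; by rewrite H.
  by apply/esym/existsP; exists k; rewrite kK H.
- move=> nA nB; apply: main_eq => //.
    case: existsP => // Hn; exfalso; apply: nB => v vK.
    case E: (col v) => //; case: Hn; exists v; by rewrite vK E.
  case: existsP => // Hn; exfalso; apply: nA => v vK.
  case E: (col v) => //; case: Hn; exists v; by rewrite vK E.
Qed.
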